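(* Let $r \ge 3$ and $b \in \{0,1\}$. For $n \ge 1$ let $g^{b\text{-}\mathrm{ff}}_r(n)$ be the maximum cardinality of a family $\mathcal{F} \subseteq \{0,1\}^n$ containing no $b$-focal family of size $r$. Then for every $n$, $$g^{b\text{-}\mathrm{ff}}_r(n) \le (r-1)\sum_{k=0}^n \frac{\binom{n}{\lceil \frac{(r-2)k}{r-1}\rceil}}{\binom{k}{\lceil \frac{(r-2)k}{r-1}\rceil}},$$ and this sum equals $\left(1 + \frac{r-2}{(r-1)^{\frac{r-1}{r-2}}} + o(1)\right)^n$ as $n \to \infty$.
   Context: For $b \in \{0,1\}$, a family $x^{(0)}, x^{(1)}, \dots, x^{(r-1)}$ of $r$ distinct vectors in $\{0,1\}^n$ is $b$-focal with focus $x^{(0)}$ if for every coordinate $i \in [n]$ with $x^{(0)}_i = b$, at least $r-2$ of the $r-1$ entries $x^{(1)}_i, \dots, x^{(r-1)}_i$ are equal to $b$. A family contains a $b$-focal family of size $r$ if some $r$ distinct members, with some choice of focus among them, form a $b$-focal family. *)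

(* Defs.v *)
From HB Require Import structures.
From mathcomp Require Import all_boot all_order all_algebra.
From mathcomp Require Import all_classical all_reals all_analysis.
Set Implicit Arguments. Unset Strict Implicit. Unset Printing Implicit Defensive.
Import Order.TTheory GRing.Theory Num.Theory.

(* Vectors in {0,1}^n, with 1 = true and 0 = false. *)
Definition bvec (n : nat) := {ffun 'I_n -> bool}.

Definition is_focal (n r : nat) (b : bool) (S : {set bvec n}) (x0 : bvec n) : bool :=
  [&& #|S| == r, x0 \in S &
      [forall i : 'I_n, (x0 i == b) ==>
         (r - 2 <= #|[set y in S :\ x0 | y i == b]|)%N]].

Definition contains_focal (n r : nat) (b : bool) (F : {set bvec n}) : bool :=
  [exists S : {set bvec n}, (S \subset F) &&
     [exists x0 : bvec n, is_focal r b S x0]].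

Definition g_ff (r : nat) (b : bool) (n : nat) : nat :=
  \max_(F : {set bvec n} | ~~ contains_focal r b F) #|F|.

(* ceil((r-2) k / (r-1)) *)
Definition mk (r k : nat) : nat := ((r - 2) * k + (r - 2)) %/ (r - 1).

Local Open Scope ring_scope.

Definition focal_sum (R : realType) (r n : nat) : R :=
  \sum_(0 <= k < n.+1) ('C(n, mk r k))%:R / ('C(k, mk r k))%:R.

Definition focal_base (R : realType) (r : nat) : R :=
  1 + (r - 2)%:R / ((r - 1)%:R `^ ((r - 1)%:R / (r - 2)%:R)).

(* Main.v *)
Require Import Defs.
From HB Require Import structures.
From mathcomp Require Import all_boot all_order all_algebra all_fingroup.
From mathcomp Require Import all_classical all_reals all_analysis.
From mathcomp Require Import zify ring lra.
From mathcomp Require Import finset fintype bigop binomial perm.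
Import Order.TTheory GRing.Theory Num.Theory numFieldNormedType.Exports.
Set Implicit Arguments. Unset Strict Implicit. Unset Printing Implicit Defensive.
Section Trans.
Variable T : finType.

Lemma trans_perm (X A B : {set T}) : A \subset X -> B \subset X -> #|A| = #|B| ->
  exists s : {perm T}, perm_on X s /\ s @: A = B.
Proof.
move=> sAX sBX cAB.
set l1 := enum A ++ enum (X :\: A) ++ enum (~: X).
set l2 := enum B ++ enum (X :\: B) ++ enum (~: X).
have cXA : #|X :\: A| = #|X :\: B|.
  by rewrite !cardsD (setIidPr sAX) (setIidPr sBX) cAB.
have Hs : size l1 = size l2 by rewrite !size_cat -!cardE cAB cXA.
have Hu2 : uniq l2.
  rewrite !cat_uniq !enum_uniq /= !has_cat !negb_or.
  rewrite andbT -!andbA; apply/and3P; split; apply/hasPn => t;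
    rewrite !mem_enum !inE; move: (subsetP sBX t);
    by case: (t \in B); case: (t \in X) => //= ->.
have Hall : forall (C : {set T}) t, t \in enum C ++ enum (X :\: C) ++ enum (~: X).
  by move=> C t; rewrite !mem_cat !mem_enum !inE; case: (t \in C); case: (t \in X).
pose f t := nth t l2 (index t l1).
have f_inj : injective f.
  move=> a c; rewrite /f => E.
  have ia : index a l1 < size l2 by rewrite -Hs index_mem Hall.
  have ic : index c l1 < size l2 by rewrite -Hs index_mem Hall.
  move: E; rewrite (set_nth_default c) // => /eqP; rewrite nth_uniq // => /eqP E.
  by rewrite -(nth_index a (Hall A a)) -/l1 E (set_nth_default a) ?Hs // nth_index // Hall.
exists (perm f_inj); split.
  apply/subsetP => t; rewrite !inE permE /f; apply: contraR => tX.
  have tA : t \notin A by apply: contra tX => /(subsetP sAX).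
  rewrite /l1 /l2 index_cat mem_enum (negbTE tA) index_cat mem_enum !inE (negbTE tX) andbF.
  rewrite nth_cat -!cardE cAB ltnNge leq_addr /= addKn nth_cat -!cardE cXA ltnNge leq_addr /= addKn.
  by rewrite nth_index // mem_enum inE.
apply/eqP; rewrite eqEcard (card_imset _ (@perm_inj _ _)) cAB leqnn andbT.
apply/subsetP => u /imsetP [t tA ->]; rewrite permE /f /l1 /l2 index_cat mem_enum tA.
have it : index t (enum A) < size (enum B) by rewrite -cardE -cAB cardE index_mem mem_enum.
by rewrite nth_cat it -(mem_enum (mem B)) mem_nth.
Qed.

Lemma blocks (t0 : T) (X : {set T}) (q m : nat) : m <= #|X| -> q * (#|X| - m) <= #|X| ->
  exists D : 'I_q -> {set T},
    (forall j, D j \subset X /\ #|D j| = m) /\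
    (forall j j', j != j' -> X \subset D j :|: D j').
Proof.
move=> mX qX; set s := #|X| - m; set e := enum X.
have se : size e = #|X| by rewrite /e -cardE.
pose E (j : 'I_q) := [set u in map (nth t0 e) (iota (j * s) s)].
have Erange : forall (j : 'I_q) i, i \in iota (j * s) s -> i < size e.
  move=> j i; rewrite mem_iota se => /andP [_ H].
  have := ltn_ord j => jq; apply: (leq_trans H); apply: leq_trans qX; nia.
have EX : forall j, E j \subset X.
  move=> j; apply/subsetP => u; rewrite inE => /mapP [i Hi ->].
  by rewrite -mem_enum -/e mem_nth // (Erange j).
have cE : forall j, #|E j| = s.
  move=> j; rewrite cardsE.
  have U : uniq (map (nth t0 e) (iota (j * s) s)).
    rewrite map_inj_in_uniq ?iota_uniq //.
    by move=> i i' Hi Hi' /eqP; rewrite nth_uniq ?enum_uniq ?(Erange j i Hi) ?(Erange j i' Hi') // => /eqP.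
  by move/card_uniqP: U => ->; rewrite size_map size_iota.
exists (fun j => X :\: E j); split.
  move=> j; split; first exact: subsetDl.
  by rewrite cardsD (setIidPr (EX j)) cE /s subKn.
move=> j j' jj'; apply/subsetP => u uX; rewrite !inE uX !andbT -negb_and.
apply/negP => /andP [] /mapP [i Hi ->] /mapP [i' Hi' /eqP].
rewrite nth_uniq ?enum_uniq ?(Erange j i Hi) ?(Erange j' i' Hi') // => /eqP ii'.
move: Hi Hi'; rewrite ii' !mem_iota => /andP [h1 h2] /andP [h3 h4].
move/eqP: jj'; apply; apply: val_inj => /=; nia.
Qed.

Lemma card_sumb (U : finType) (A : {set U}) (Q : pred U) :
  #|[set u in A | Q u]| = \sum_(u in A) Q u.
Proof.
rewrite -sum1_card big_mkcond /= [RHS]big_mkcond /=; apply: eq_bigr => u _.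
by rewrite inE; case: (u \in A); case: (Q u).
Qed.

Lemma avoid (t0 : T) (X : {set T}) (q m : nat) (P : {set {set T}}) :
  m <= #|X| -> q * (#|X| - m) <= #|X| ->
  (forall B, B \in P -> B \subset X /\ #|B| = m) ->
  q * #|P| < 'C(#|X|, m) ->
  exists Y : 'I_q -> {set T},
    (forall j, [/\ Y j \subset X, #|Y j| = m & Y j \notin P]) /\
    (forall j j', j != j' -> X \subset Y j :|: Y j').
Proof.
move=> mX qX HP Hlt.
pose G := [set s : {perm T} | perm_on X s].
pose msub := [set B : {set T} | B \subset X & #|B| == m].
have cmsub : #|msub| = 'C(#|X|, m) by rewrite cards_draws.
pose c (B : {set T}) := #|[set s in G | s @: B \in P]|.
have imM : forall (s t : {perm T}) (B : {set T}), (s * t)%g @: B = t @: (s @: B).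
  by move=> s t B; rewrite -imset_comp; apply: eq_imset => x; rewrite permM.
have Claim1 : forall B B', B \in msub -> B' \in msub -> c B <= c B'.
  move=> B B'; rewrite !inE => /andP [BX /eqP cB] /andP [B'X /eqP cB'].
  have [tau [tauX tauB]] := trans_perm B'X BX (etrans cB' (esym cB)).
  rewrite /c -(card_imset _ (mulgI tau)); apply: subset_leq_card.
  apply/subsetP => u /imsetP [s]; rewrite !inE => /andP [sX sP] ->.
  by rewrite perm_onM //= imM tauB sP.
have Claim2 : forall B, B \in msub -> c B * 'C(#|X|, m) <= #|G| * #|P|.
  move=> B HB.
  have E1 : c B * 'C(#|X|, m) <= \sum_(B' in msub) c B'.
    rewrite -cmsub mulnC -sum_nat_const; rewrite big_mkcond [X in _ <= X]big_mkcond /=.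
    apply: leq_sum => B' _; case: ifP => // HB'; exact: Claim1.
  apply: (leq_trans E1).
  have E2 : \sum_(B' in msub) c B' = \sum_(s in G) #|[set B' in msub | s @: B' \in P]|.
    rewrite /c; under eq_bigr do rewrite card_sumb.
    rewrite exchange_big /=; apply: eq_bigr => s _; by rewrite card_sumb.
  rewrite E2 -sum_nat_const big_mkcond [X in _ <= X]big_mkcond /=.
  apply: leq_sum => s _; case: ifP => //; rewrite inE => sX.
  rewrite -(card_imset _ (imset_inj (@perm_inj _ s))); apply: subset_leq_card.
  by apply/subsetP => u /imsetP [B']; rewrite inE => /andP [_ H] ->.
have [D [HD Dcov]] := blocks t0 mX qX.
have Gpos : 0 < #|G| by apply/card_gt0P; exists 1%g; rewrite inE perm_on1.
have DM : forall j, D j \in msub by move=> j; rewrite inE (HD j).1 (HD j).2 eqxx.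
have [s sG sP] : exists2 s, s \in G & forall j, s @: D j \notin P.
  case: (boolP [exists s in G, [forall j, s @: D j \notin P]]).
    by move=> /existsP [s /andP [sG /forallP H]]; exists s.
  move=> H; exfalso.
  have H1 : forall s, s \in G -> 1 <= \sum_(j < q) (s @: D j \in P).
    move=> s sG.
    have : ~~ [forall j, s @: D j \notin P].
      by apply: contra H => Hf; apply/existsP; exists s; rewrite sG.
    rewrite negb_forall => /existsP [j]; rewrite negbK => Hj.
    by rewrite (bigD1 j) //= Hj.
  have H2 : #|G| <= \sum_(j < q) c (D j).
    rewrite /c; under eq_bigr do rewrite card_sumb.
    rewrite exchange_big /= -sum1_card big_mkcond [X in _ <= X]big_mkcond /=.
    by apply: leq_sum => u _; case: ifP => // uG; apply: H1.
  have H3 : (\sum_(j < q) c (D j)) * 'C(#|X|, m) <= q * (#|G| * #|P|).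
    rewrite big_distrl /=.
    apply: leq_trans (_ : \sum_(j < q) (#|G| * #|P|) <= _).
      by apply: leq_sum => j _; apply: Claim2.
    by rewrite sum_nat_const card_ord.
  move: H2 H3 Hlt Gpos; set S := \sum_(j < q) c (D j); set C := 'C(#|X|, m); nia.
rewrite inE in sG.
exists (fun j => s @: D j); split.
  move=> j; split.
  - apply/subsetP => u /imsetP [x xD ->]; rewrite perm_closed //.
    exact: (subsetP (HD j).1).
  - by rewrite card_imset ?(HD j).2 //; apply: perm_inj.
  - exact: sP.
move=> j j' jj'; apply/subsetP => u uX.
have : (s^-1)%g u \in D j :|: D j'.
  by apply: (subsetP (Dcov j j' jj')); rewrite perm_closed // perm_onV.
rewrite !inE => /orP [] H; apply/orP; [left|right]; apply/imsetP; exists ((s^-1)%g u) => //;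
  by rewrite permKV.
Qed.
End Trans.
Lemma mk_facts (r k : nat) : 3 <= r -> mk r k <= k /\ (r - 1) * (k - mk r k) <= k.
Proof.
move=> r3; rewrite /mk.
set a := (r - 2) * k + (r - 2).
have := divn_eq a (r - 1); have := ltn_pmod a (_ : 0 < r - 1).
set d := a %/ (r - 1); set e := a %% (r - 1).
move=> /(_ ltac:(lia)) He Ha.
have Hd : d <= k.
  have : d * (r - 1) < (k + 1) * (r - 1) by rewrite /a in Ha; nia.
  rewrite ltn_pmul2r; last by lia.
  lia.
split => //.
rewrite /a in Ha; nia.
Qed.

Section Main.
Variables (n r : nat) (b : bool) (F : {set bvec n}).
Hypothesis r3 : 3 <= r.
Hypothesis n1 : 1 <= n.
Hypothesis noF : ~~ contains_focal r b F.

Definition supp (x : bvec n) : {set 'I_n} := [set i | x i == b].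

Lemma supp_inj : injective supp.
Proof.
move=> x y E; apply/ffunP => i.
have := congr1 (fun S : {set 'I_n} => i \in S) E; rewrite /= !inE.
by case: (x i); case: (y i); case: b.
Qed.

Definition Fk (k : nat) := [set x in F | #|supp x| == k].

Definition priv (k : nat) (x : bvec n) := [set B : {set 'I_n} |
  [&& B \subset supp x, #|B| == mk r k &
      [forall y in Fk k, (y != x) ==> ~~ (B \subset supp y)]]].

Lemma priv_bound k x : x \in Fk k -> 'C(k, mk r k) <= (r - 1) * #|priv k x|.
Proof.
move=> xF; have /andP [xF' /eqP cx] : (x \in F) && (#|supp x| == k) by rewrite inE in xF.
have t0 : 'I_n by exists 0.
rewrite leqNgt; apply/negP => Hlt.
have [mk1 mk2] := mk_facts k r3.
have HP : forall B, B \in priv k x -> B \subset supp x /\ #|B| = mk r k.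
  by move=> B; rewrite inE => /and3P [H1 /eqP H2 _].
have := @avoid _ t0 (supp x) (r - 1) (mk r k) (priv k x); rewrite cx.
move=> /(_ mk1 mk2 HP Hlt) [Y [HY Ycov]].
have Hex : forall j, exists y, (y \in Fk k) && (y != x) && (Y j \subset supp y).
  move=> j; have [Y1 Y2 Y3] := HY j.
  move: Y3; rewrite inE Y1 Y2 eqxx /= negb_forall => /existsP [y].
  rewrite negb_imply negb_imply negbK => /andP [yF /andP [yx Hy]].
  by exists y; rewrite yF yx Hy.
pose yf (j : 'I_(r - 1)) := odflt x [pick y | (y \in Fk k) && (y != x) && (Y j \subset supp y)].
have Hy : forall j, [/\ yf j \in Fk k, yf j != x & Y j \subset supp (yf j)].
  move=> j; rewrite /yf; case: pickP => [y /andP [/andP [H1 H2] H3] | H] //=.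
  by have [y Hy'] := Hex j; rewrite H in Hy'.
have yf_inj : injective yf.
  move=> j j' E; apply/eqP; apply/negP => /negP jj'.
  have [yF yx sy] := Hy j; have [_ _ sy'] := Hy j'.
  rewrite -E in sy'.
  have sxy : supp x \subset supp (yf j).
    by apply: subset_trans (Ycov j j' jj') _; rewrite subUset sy sy'.
  have /andP [_ /eqP cy] : (yf j \in F) && (#|supp (yf j)| == k) by rewrite inE in yF.
  have : supp x == supp (yf j) by rewrite eqEcard sxy cx cy leqnn.
  by move=> /eqP /supp_inj Exy; rewrite Exy eqxx in yx.
pose S := x |: [set yf j | j : 'I_(r - 1)].
move/negP: noF; apply.
apply/existsP; exists S; apply/andP; split.
  apply/subsetP => y; rewrite !inE => /orP [/eqP -> // | /imsetP [j _ ->]].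
  by have [yF _ _] := Hy j; rewrite inE in yF; case/andP: yF.
apply/existsP; exists x; rewrite /is_focal; apply/and3P; split.
- rewrite cardsU1 card_imset // card_ord.
  have -> : x \notin [set yf j | j : 'I_(r - 1)].
    by apply/imsetP => -[j _ E]; have [_ yx _] := Hy j; rewrite -E eqxx in yx.
  apply/eqP; lia.
- exact: setU11.
- apply/forallP => i; apply/implyP => xi.
  have ix : i \in supp x by rewrite inE.
  pose J := [set j : 'I_(r - 1) | i \in Y j].
  have cJ : r - 2 <= #|J|.
    have : #|~: J| <= 1.
      apply/card_le1_eqP => j j'; rewrite !inE => nj nj'; have [->//|jj'] := eqVneq j j'.
      by have := subsetP (Ycov j j' jj') i ix; rewrite !inE (negbTE nj) (negbTE nj').
    have := cardsC J; rewrite card_ord; lia.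
  apply: leq_trans cJ _; rewrite -(card_imset _ yf_inj); apply: subset_leq_card.
  apply/subsetP => y /imsetP [j jJ ->]; have [_ yx sy] := Hy j.
  rewrite inE in jJ.
  have := subsetP sy i jJ; rewrite !inE => ->.
  by rewrite yx andbT /= imset_f ?orbT.
Qed.

Lemma Fk_bound k : #|Fk k| * 'C(k, mk r k) <= (r - 1) * 'C(n, mk r k).
Proof.
set m := mk r k.
pose msub := [set B : {set 'I_n} | #|B| == m].
have E1 : #|Fk k| * 'C(k, m) <= (r - 1) * \sum_(x in Fk k) #|priv k x|.
  rewrite -sum_nat_const big_distrr /= big_mkcond [X in _ <= X]big_mkcond /=.
  by apply: leq_sum => x _; case: ifP => // xF; apply: priv_bound.
apply: (leq_trans E1); rewrite leq_mul2l; apply/orP; right.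
have E2 : forall x, #|priv k x| = #|[set B in msub | B \in priv k x]|.
  move=> x; apply: eq_card => B; rewrite [B \in [set _ in msub | _]]in_set.
  case: (boolP (B \in priv k x)) => H; rewrite ?andbF ?andbT //.
  by move: H; rewrite !inE => /and3P [_ -> _].
under eq_bigr do rewrite E2 card_sumb.
have -> : 'C(n, m) = #|msub| by rewrite card_draws card_ord.
rewrite exchange_big /=.
rewrite -sum1_card big_mkcond [X in _ <= X]big_mkcond /=; apply: leq_sum => B _.
case: ifP => // _.
rewrite -card_sumb; apply/card_le1_eqP => x x'; rewrite !inE => /andP [xF Px] /andP [x'F Px'].
have [//|xx'] := eqVneq x' x.
move: Px => /and3P [_ _ /forallP /(_ x')]; rewrite inE x'F xx' /=.
by move: Px' => /and3P [-> _ _].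
Qed.

Lemma F_decomp : #|F| = \sum_(k < n.+1) #|Fk k|.
Proof.
rewrite -sum1_card.
have E : forall x : bvec n, 1 = \sum_(k < n.+1) (#|supp x| == k).
  move=> x; have sx : #|supp x| < n.+1 by rewrite ltnS -[X in _ <= X]card_ord max_card.
  rewrite (bigD1 (Ordinal sx)) //= eqxx big1 // => j jn.
  by apply/eqP; rewrite eqb0; apply: contra jn => /eqP E; apply/eqP/val_inj.
rewrite (eq_bigr _ (fun x _ => E x)) exchange_big /=; apply: eq_bigr => k _.
by rewrite /Fk card_sumb.
Qed.
End Main.

Local Open Scope classical_set_scope.
Local Open Scope ring_scope.

Lemma part1 (R : realType) (r : nat) (b : bool) (n : nat) : (3 <= r)%N -> (1 <= n)%N ->
  (g_ff r b n)%:R <= (r - 1)%:R * focal_sum R r n.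
Proof.
move=> r3 n1.
have RHS0 : 0 <= (r - 1)%:R * focal_sum R r n.
  apply: mulr_ge0 => //; rewrite /focal_sum; apply: sumr_ge0 => k _; apply: divr_ge0; exact: ler0n.
rewrite /g_ff; elim/big_ind: _ => //.
  by move=> x y Hx Hy; rewrite /maxn; case: ifP.
move=> F noF.
rewrite (F_decomp b F) natr_sum /focal_sum big_mkord mulr_sumr; apply: ler_sum => k _.
have [mk1 _] := mk_facts k r3.
rewrite mulrA ler_pdivlMr ?ltr0n ?bin_gt0 // -!natrM ler_nat.
exact: Fk_bound.
Qed.
Set Implicit Arguments. Unset Strict Implicit. Unset Printing Implicit Defensive.
Local Open Scope classical_set_scope.
Local Open Scope ring_scope.

Section Generic.
Variable R : realType.

Lemma binom_sum (z : R) n : (1 + z) ^+ n = \sum_(j < n.+1) 'C(n, j)%:R * z ^+ j.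
Proof. by rewrite exprDn; apply: eq_bigr => j _; rewrite expr1n mul1r mulr_natl. Qed.

Lemma binom_term (z : R) n j : 0 <= z -> 'C(n, j)%:R * z ^+ j <= (1 + z) ^+ n.
Proof.
move=> z0; case: (ltnP j n.+1) => jn.
  rewrite binom_sum (bigD1 (Ordinal jn)) //= lerDl; apply: sumr_ge0 => i _.
  by apply: mulr_ge0; [exact: ler0n | exact: exprn_ge0].
rewrite bin_small // mul0r; apply: exprn_ge0; exact: addr_ge0.
Qed.

Lemma decr_from (f : nat -> R) m : (forall j, (m <= j)%N -> f j.+1 <= f j) ->
  forall j, (m <= j)%N -> f j <= f m.
Proof.
move=> Hd j mj; rewrite -(subnKC mj); elim: (j - m)%N => [|i IH]; first by rewrite addn0.
by apply: le_trans IH; rewrite addnS; apply: Hd; exact: leq_addr.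
Qed.

Lemma unimodal (f : nat -> R) m : (forall j, (j < m)%N -> f j <= f j.+1) ->
  (forall j, (m <= j)%N -> f j.+1 <= f j) -> forall j, f j <= f m.
Proof.
move=> Hi Hd j; case: (leqP j m) => jm; last by apply: decr_from => //; exact: ltnW.
have H : forall i, (j + i <= m)%N -> f j <= f (j + i)%N.
  elim=> [|i IH] H; first by rewrite addn0.
  have H1 : (j + i < m)%N by rewrite -addnS.
  by apply: le_trans (IH (ltnW H1)) _; rewrite addnS; exact: Hi.
by have := H (m - j)%N; rewrite subnKC //; apply.
Qed.
End Generic.


Section PolyExp.
Variable R : realType.

Lemma bin3_bound n : (8 <= n)%N -> (n * n.+1 ^ 2 <= 12 * 'C(n, 3))%N.
Proof.
move=> n8; have := bin_ffact n 3; rewrite !ffactnS ffactn0 /= => E.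
have E' : ('C(n, 3) * 6 = n * (n.-1 * (n.-2 * 1)))%N by rewrite -E.
nia.
Qed.

Lemma poly_exp (d c : R) : 0 < d ->
  exists N, forall n, (N <= n)%N -> c * ((n.+1)%:R) ^+ 2 < (1 + d) ^+ n.
Proof.
move=> d0; have d3 : 0 < d ^+ 3 by rewrite exprn_gt0.
set K := 12%:R * c / d ^+ 3.
exists (maxn 8 (Num.truncn K).+1) => n; rewrite geq_max => /andP [n8 nK].
have HK : K < n%:R by apply: lt_le_trans (truncnS_gt K) _; rewrite ler_nat.
have HK' : 12%:R * c < n%:R * d ^+ 3 by rewrite /K ltr_pdivrMr in HK.
have H1 := binom_term n 3 (ltW d0).
have H2 : (n * n.+1 ^ 2)%:R <= (12 * 'C(n, 3))%:R :> R by rewrite ler_nat bin3_bound.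
have n2 : (0 : R) < (n.+1)%:R ^+ 2 by rewrite exprn_gt0 ?ltr0n.
rewrite -(ltr_pM2l (_ : (0 : R) < 12%:R)) ?ltr0n //.
apply: lt_le_trans (_ : n%:R * d ^+ 3 * (n.+1)%:R ^+ 2 <= _).
  by rewrite mulrA ltr_pM2r.
apply: le_trans (_ : 12%:R * ('C(n, 3)%:R * d ^+ 3) <= _); last first.
  by rewrite ler_pM2l ?ltr0n.
have -> : n%:R * d ^+ 3 * (n.+1)%:R ^+ 2 = d ^+ 3 * (n * n.+1 ^ 2)%:R :> R.
  by rewrite natrM natrX; ring.
have -> : 12%:R * ('C(n, 3)%:R * d ^+ 3) = d ^+ 3 * (12 * 'C(n, 3))%:R :> R.
  by rewrite natrM; ring.
by rewrite ler_pM2l.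
Qed.
End PolyExp.

Section Asym.
Variables (R : realType) (r : nat).
Hypothesis r3 : (3 <= r)%N.
Let p := (r - 2)%N.
Let q := (r - 1)%N.
Let qp : q = p.+1. Proof. rewrite /q /p; lia. Qed.
Let p1 : (1 <= p)%N. Proof. rewrite /p; lia. Qed.

Lemma A_facts k : (p * k <= q * mk r k)%N /\ (q * mk r k <= p * k + p)%N.
Proof.
rewrite /mk -/p -/q.
set a := (p * k + p)%N.
have := divn_eq a q; have := ltn_pmod a (_ : 0 < q)%N.
set d := (a %/ q)%N; set e := (a %% q)%N.
move=> /(_ ltac:(rewrite qp; lia)) He Ha.
rewrite /a in Ha; split; nia.
Qed.

Definition wR : R := (q%:R : R) `^ (p%:R^-1).

Lemma w_ge1 : 1 <= wR.
Proof.
have q1 : (1 : R) <= q%:R by rewrite qp ler1n.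
rewrite /wR; apply: le_trans (_ : (q%:R : R) `^ 0 <= _); first by rewrite powRr0.
by apply: (ler_powR q1); rewrite invr_ge0 ler0n.
Qed.

Lemma w_gt0 : 0 < wR.
Proof. exact: lt_le_trans ltr01 w_ge1. Qed.

Lemma wXp : wR ^+ p = q%:R.
Proof.
rewrite /wR -powR_mulrn ?powR_ge0 // -powRrM mulVf ?powRr1 ?ler0n //.
by rewrite pnatr_eq0 -lt0n.
Qed.

Definition zR : R := p%:R / (q%:R * wR).

Lemma z_ge0 : 0 <= zR.
Proof. by rewrite /zR divr_ge0 ?mulr_ge0 ?ler0n // ltW // w_gt0. Qed.

Lemma base_eq : focal_base R r = 1 + zR.
Proof.
rewrite /focal_base /zR -/p -/q; congr (1 + _ / _).
have -> : (q%:R / p%:R : R) = 1 + p%:R^-1.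
  by rewrite qp -addn1 natrD mulrDl divff ?mul1r // pnatr_eq0 -lt0n.
rewrite powRD ?powRr1 ?ler0n //.
by rewrite qp pnatr_eq0 implybT.
Qed.


Lemma mode k : (q%:R : R) ^+ k <= (k.+1)%:R * ('C(k, mk r k)%:R * p%:R ^+ mk r k).
Proof.
set m := mk r k.
pose f j : R := 'C(k, j)%:R * p%:R ^+ j.
have [A1 A2] := A_facts k.
have step : forall j, (j.+1)%:R * f j.+1 = ((k - j) * p)%:R * f j.
  move=> j; rewrite /f exprS mulrA mulrA -natrM mul_bin_left !natrM; ring.
have f0 : forall j, 0 <= f j by move=> j; rewrite /f mulr_ge0 ?ler0n ?exprn_ge0 ?ler0n.
have Hu := @unimodal R f m.
have Hf : forall j, f j <= f m.
  apply: Hu => j Hj.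
    rewrite -(ler_pM2l (_ : 0 < (j.+1)%:R)) ?ltr0n // step.
    apply: ler_wpM2r => //; rewrite ler_nat.
    have : (j < k)%N by apply: leq_trans Hj _; have := mk_facts k r3; case.
    rewrite -/m in A1 A2; move=> jk; rewrite qp in A1 A2; nia.
  rewrite -(ler_pM2l (_ : 0 < (j.+1)%:R)) ?ltr0n // step.
  apply: ler_wpM2r => //; rewrite ler_nat.
  rewrite -/m in A1 A2; rewrite qp in A1 A2; nia.
have -> : (q%:R : R) = 1 + p%:R by rewrite qp -addn1 natrD addrC.
rewrite binom_sum; apply: le_trans (_ : \sum_(j < k.+1) f m <= _).
  by apply: ler_sum => j _; apply: Hf.
by rewrite sumr_const card_ord mulr_natl.
Qed.


Lemma zpow m : zR ^+ m = p%:R ^+ m / ((q%:R : R) ^+ m * wR ^+ m).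
Proof. by rewrite /zR expr_div_n exprMn. Qed.

Lemma q_eq : (q%:R : R) = 1 + p%:R.
Proof. by rewrite qp -addn1 natrD addrC. Qed.

Lemma qm_gt0 m : 0 < (q%:R : R) ^+ m * wR ^+ m.
Proof. by apply: mulr_gt0; apply: exprn_gt0; [rewrite ltr0n qp | exact: w_gt0]. Qed.

Lemma a_lower n k : 'C(n, mk r k)%:R * zR ^+ mk r k <= 'C(n, mk r k)%:R / 'C(k, mk r k)%:R :> R.
Proof.
set m := mk r k; have [mk1 _] := mk_facts k r3; have [A1 A2] := A_facts k.
have Ck : (0 : R) < 'C(k, m)%:R by rewrite ltr0n bin_gt0.
have key : 'C(k, m)%:R * zR ^+ m <= 1.
  rewrite zpow mulrA ler_pdivrMr ?mul1r ?qm_gt0 //.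
  apply: le_trans (_ : (q%:R : R) ^+ k <= _).
    by rewrite q_eq; apply: binom_term; exact: ler0n.
  rewrite -(subnKC mk1) exprD ler_wpM2l ?exprn_ge0 ?ler0n //.
  rewrite -wXp -exprM; apply: ler_weXn2l; first exact: w_ge1.
  rewrite -/m in A1 A2; rewrite qp in A1 A2; nia.
rewrite ler_pdivlMr // -[X in _ <= X]mulr1 -mulrA [zR ^+ m * _]mulrC ler_wpM2l ?ler0n //.
Qed.

Lemma a_upper n k : 'C(n, mk r k)%:R / 'C(k, mk r k)%:R <=
  q%:R * (k.+1)%:R * ('C(n, mk r k)%:R * zR ^+ mk r k) :> R.
Proof.
set m := mk r k; have [mk1 _] := mk_facts k r3; have [A1 A2] := A_facts k.
have Ck : (0 : R) < 'C(k, m)%:R by rewrite ltr0n bin_gt0.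
have key : 1 <= q%:R * (k.+1)%:R * 'C(k, m)%:R * zR ^+ m.
  rewrite zpow mulrA ler_pdivlMr ?mul1r ?qm_gt0 //.
  apply: le_trans (_ : (q%:R : R) * q%:R ^+ k <= _); last first.
    by rewrite -!mulrA ler_wpM2l ?ler0n //; exact: mode.
  rewrite -exprS -(subnKC mk1) -addnS exprD ler_wpM2l ?exprn_ge0 ?ler0n //.
  rewrite -wXp -exprM; apply: ler_weXn2l; first exact: w_ge1.
  rewrite -/m in A1 A2; rewrite qp in A1 A2 *; nia.
rewrite ler_pdivrMr //.
have -> : q%:R * (k.+1)%:R * ('C(n, m)%:R * zR ^+ m) * 'C(k, m)%:R =
  'C(n, m)%:R * (q%:R * (k.+1)%:R * 'C(k, m)%:R * zR ^+ m) :> R by ring.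
by rewrite -[X in X <= _]mulr1 ler_wpM2l ?ler0n.
Qed.

Lemma fs_ord n : focal_sum R r n =
  \sum_(k < n.+1) ('C(n, mk r k)%:R / 'C(k, mk r k)%:R : R).
Proof. by rewrite /focal_sum big_mkord. Qed.

Lemma a_ge0 n k : (0 : R) <= 'C(n, mk r k)%:R / 'C(k, mk r k)%:R.
Proof. by rewrite divr_ge0 ?ler0n. Qed.

Lemma a_le_S n (k : 'I_n.+1) :
  'C(n, mk r k)%:R / 'C(k, mk r k)%:R <= focal_sum R r n.
Proof.
rewrite fs_ord (bigD1 k) //= lerDl; apply: sumr_ge0 => i _; exact: a_ge0.
Qed.

Lemma S_upper n : focal_sum R r n <= q%:R * ((n.+1)%:R) ^+ 2 * (1 + zR) ^+ n.
Proof.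
rewrite fs_ord.
apply: le_trans (_ : \sum_(k < n.+1) (q%:R * (n.+1)%:R * (1 + zR) ^+ n) <= _); last first.
  by rewrite sumr_const card_ord -mulr_natl; rewrite le_eqVlt; apply/orP; left; apply/eqP; ring.
apply: ler_sum => k _; apply: le_trans (a_upper n k) _.
apply: ler_pM.
- by rewrite mulr_ge0 ?ler0n.
- by rewrite mulr_ge0 ?ler0n ?exprn_ge0 ?z_ge0.
- by rewrite ler_wpM2l ?ler0n // ler_nat.
- apply: binom_term; exact: z_ge0.
Qed.

Lemma mk_step n : (mk r n.+1 <= (mk r n).+1)%N.
Proof.
have [A1 _] := A_facts n; have [_ A2] := A_facts n.+1.
rewrite qp in A1 A2; nia.
Qed.

Lemma mk0 : mk r 0 = 0%N.
Proof. have [_ A2] := A_facts 0; rewrite qp in A2; nia. Qed.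

Lemma mk_surj n j : (j <= mk r n)%N -> exists2 k, (k <= n)%N & mk r k = j.
Proof.
elim: n j => [|n IH] j Hj.
  by exists 0%N => //; move: Hj; rewrite mk0 leqn0 => /eqP ->.
case: (leqP j (mk r n)) => Hjn.
  by have [k kn Hk] := IH j Hjn; exists k => //; apply: leq_trans kn _.
exists n.+1 => //; apply/eqP; rewrite eqn_leq Hj andbT.
exact: leq_trans (mk_step n) Hjn.
Qed.

Lemma z_le : zR <= p%:R / q%:R.
Proof.
rewrite /zR invfM mulrA; apply: ler_piMr; first by rewrite divr_ge0 ?ler0n.
by rewrite invf_le1 ?w_gt0 ?w_ge1.
Qed.

Lemma S_lower n : (1 + zR) ^+ n <= (n.+1)%:R * focal_sum R r n.
Proof.
pose g j : R := 'C(n, j)%:R * zR ^+ j.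
set M := mk r n.
have g0 : forall j, 0 <= g j by move=> j; rewrite /g mulr_ge0 ?ler0n ?exprn_ge0 ?z_ge0.
have step : forall j, (M <= j)%N -> g j.+1 <= g j.
  move=> j Mj.
  rewrite -(ler_pM2l (_ : 0 < (j.+1)%:R)) ?ltr0n //.
  have -> : (j.+1)%:R * g j.+1 = (n - j)%:R * zR * g j.
    by rewrite /g exprS mulrA mulrA -natrM mul_bin_left natrM; ring.
  apply: ler_wpM2r => //.
  apply: le_trans (_ : (n - j)%:R * (p%:R / q%:R) <= _).
    by rewrite ler_wpM2l ?ler0n ?z_le.
  rewrite mulrA ler_pdivrMr ?ltr0n ?qp // -!natrM ler_nat.
  have [A1 _] := A_facts n; rewrite -/M qp in A1; rewrite -qp; rewrite qp; nia.
have Hg : forall j, g j <= focal_sum R r n.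
  move=> j; case: (leqP j M) => jM.
    have [k kn <-] := mk_surj jM.
    apply: le_trans (a_lower n k) _.
    have kn' : (k < n.+1)%N by [].
    exact: (a_le_S (Ordinal kn')).
  apply: le_trans (decr_from step (ltnW jM)) _.
  apply: le_trans (a_lower n n) _.
  exact: (a_le_S (Ordinal (ltnSn n))).
rewrite binom_sum; apply: le_trans (_ : \sum_(j < n.+1) focal_sum R r n <= _).
  by apply: ler_sum => j _; apply: Hg.
by rewrite sumr_const card_ord mulr_natl.
Qed.

Lemma S_ge0 n : (0 : R) <= focal_sum R r n.
Proof. by rewrite fs_ord; apply: sumr_ge0 => k _; exact: a_ge0. Qed.

Lemma part2 : exists eps : nat -> R,
  (eps n @[n --> \oo] --> (0 : R))%classic /\
  forall n : nat, focal_sum R r n = (focal_base R r + eps n) ^+ n.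
Proof.
set beta := 1 + zR.
have b1 : 1 <= beta by rewrite /beta lerDl z_ge0.
have b0 : 0 < beta by apply: lt_le_trans b1.
pose t (n : nat) : R := focal_sum R r n `^ (n%:R^-1).
have tn : forall n, (0 < n)%N -> t n ^+ n = focal_sum R r n.
  move=> n n0; rewrite /t -powR_mulrn ?powR_ge0 // -powRrM mulVf ?powRr1 ?S_ge0 //.
  by rewrite pnatr_eq0 -lt0n.
have t0 : forall n, 0 <= t n by move=> n; exact: powR_ge0.
exists (fun n => if n is 0%N then 0 else t n - beta); split; last first.
  rewrite base_eq -/beta; case=> [|n].
    by rewrite expr0 fs_ord big_ord1 /= mk0 bin0 divr1.
  by rewrite addrC subrK tn.
apply/cvgrPdist_lt => e e0.
have d0 : 0 < e / beta by rewrite divr_gt0.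
have [N HN] := poly_exp (q%:R) d0.
exists (maxn 1 N) => // n /=; rewrite geq_max => /andP [n1 nN].
have HN' := HN n nN.
case: n n1 nN HN' => [//|n] _ nN HN'.
rewrite sub0r normrN.
have qn : (n.+2)%:R <= q%:R * (n.+2)%:R ^+ 2 :> R.
  rewrite expr2 mulrA ler_peMl ?ler0n //.
  by rewrite -natrM ler1n muln_gt0 qp.
have E1 : beta * (1 + e / beta) = beta + e by rewrite mulrDr mulr1 mulrCA divff ?mulr1 // gt_eqF.
have L : beta - e < t n.+1.
  rewrite ltNge; apply/negP => Ht.
  have be : 0 <= beta - e by apply: le_trans Ht.
  have H1 := S_lower n.+1.
  have H2 : focal_sum R r n.+1 <= (beta - e) ^+ n.+1.
    by rewrite -tn //; apply: lerXn2r; rewrite ?nnegrE.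
  have H3 : (beta - e) * (1 + e / beta) <= beta.
    have -> : (beta - e) * (1 + e / beta) = beta - e ^+ 2 / beta.
      by field; rewrite gt_eqF.
    by rewrite lerBlDr lerDl divr_ge0 ?exprn_ge0 ?ltW.
  have H4 : beta ^+ n.+1 * (1 + e / beta) ^+ n.+1 <= (n.+2)%:R * beta ^+ n.+1.
    apply: le_trans (_ : (n.+2)%:R * ((beta - e) * (1 + e / beta)) ^+ n.+1 <= _); last first.
      rewrite ler_wpM2l ?ler0n //; apply: lerXn2r => //; rewrite nnegrE;
        [apply: mulr_ge0 => //; apply: addr_ge0 => //; exact: ltW | exact: ltW].
    rewrite exprMn mulrA ler_wpM2r //; first by apply: exprn_ge0; apply: addr_ge0 => //; exact: ltW.
    apply: le_trans H1 _; rewrite ler_wpM2l ?ler0n //.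
  have H5 : (1 + e / beta) ^+ n.+1 <= (n.+2)%:R.
    by rewrite -(ler_pM2l (exprn_gt0 n.+1 b0)) [X in _ <= X]mulrC.
  by have := lt_le_trans HN' (le_trans H5 qn); rewrite ltxx.
have U : t n.+1 < beta + e.
  rewrite ltNge; apply/negP => Ht.
  have H1 := S_upper n.+1.
  have H2 : (beta + e) ^+ n.+1 <= focal_sum R r n.+1.
    by rewrite -tn //; apply: lerXn2r; rewrite ?nnegrE // addr_ge0 // ltW.
  rewrite -E1 exprMn in H2.
  have H5 : (1 + e / beta) ^+ n.+1 <= q%:R * (n.+2)%:R ^+ 2.
    rewrite -(ler_pM2l (exprn_gt0 n.+1 b0)); apply: le_trans H2 (le_trans H1 _).
    by rewrite mulrC.
  by have := lt_le_trans HN' H5; rewrite ltxx.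
rewrite ltr_norml; apply/andP; split; lra.
Qed.
End Asym.

Theorem corollary5p3 (R : realType) (r : nat) (b : bool) :
  (3 <= r)%N ->
  (forall n : nat, (1 <= n)%N ->
     (g_ff r b n)%:R <= (r - 1)%:R * focal_sum R r n) /\
  (exists eps : nat -> R,
     eps n @[n --> \oo] --> (0 : R) /\
     forall n : nat, focal_sum R r n = (focal_base R r + eps n) ^+ n).
Proof.
move=> r3; split.
  by move=> n n1; exact: part1.
exact: part2.
Qed.
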